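(* Let $q=p^a$, let $\iota:\mathbf Z_p\to\mathbf C$ be an embedding of rings, and let $(M,F)$ satisfy (M1)–(M4). Then complex conjugation on $M\otimes\mathbf C$ maps the subspace $M^s\otimes_{\mathbf Z_p,\iota}\mathbf C$ onto $M^{2-s}\otimes_{\mathbf Z_p,\iota}\mathbf C$ for $s=0,1,2$. In particular the decomposition $M\otimes\mathbf C=\bigoplus_s M^s\otimes_{\mathbf Z_p,\iota}\mathbf C$ (with $M^s\otimes_{\mathbf Z_p,\iota}\mathbf C$ in Hodge type $(s,2-s)$) is a $\mathbf Z$-Hodge structure on $M$.
   Context: $M$ is a free $\mathbf Z$-module of finite rank with a symmetric bilinear form $\langle-,-\rangle$ and $F$ an endomorphism of $M$. (M1) $\langle-,-\rangle$ is unimodular, even, of signature $(3,19)$; (M2) $\langle Fx,Fy\rangle=q^2\langle x,y\rangle$ for all $x,y$; (M3) $F$ is semisimple on $M\otimes\mathbf C$ with all eigenvalues of absolute value $q$; (M4) the $\mathbf Z_p[F]$-module $M\otimes\mathbf Z_p$ decomposes as $M^0\oplus M^1\oplus M^2$ with $FM^s=q^sM^s$ and $M^0,M^1,M^2$ free of ranks $1,20,1$. Here $M\otimes\mathbf C=(M\otimes\mathbf Z_p)\otimes_{\mathbf Z_p,\iota}\mathbf C$. *)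

(* Defs.v *)
From HB Require Import structures.
From mathcomp Require Import all_boot all_order all_algebra.
Set Implicit Arguments. Unset Strict Implicit. Unset Printing Implicit Defensive.
Import Order.TTheory GRing.Theory Num.Theory.
Local Open Scope ring_scope.

(* p-adic integers.  Z_p is not in the library; we characterise it up *)
(* to (unique) isomorphism as a commutative ring R which is p-adically *)
(* separated and complete with R / p^n R = Z / p^n Z, i.e. the natural *)
(* map R -> lim_n Z/p^n Z is a ring isomorphism.                       *)

Definition pdvd (R : pzRingType) (p n : nat) (x : R) : Prop :=
  exists y : R, x = (p ^ n)%N%:R * y.

Definition is_padic_integers (R : comNzRingType) (p : nat) : Prop :=
  [/\
      forall x : R, (forall n, pdvd p n x) -> x = 0,
      forall (x : R) (n : nat), exists k : int, pdvd p n (x - k%:~R),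
      forall k : nat -> int, (forall n, ((p ^ n)%N%:Z %| k n.+1 - k n)%Z) ->
        exists x : R, forall n, pdvd p n (x - (k n)%:~R)
    &
      forall (k : int) (n : nat), pdvd p n (k%:~R : R) -> ((p ^ n)%N%:Z %| k)%Z].

(* Lattices: M = Z^n with a symmetric bilinear form given by B.        *)

Definition intmx (R : pzRingType) (m n : nat) (A : 'M[int]_(m, n)) : 'M[R]_(m, n) :=
  map_mx (fun z : int => z%:~R) A.

Definition unimodular (n : nat) (B : 'M[int]_n) : Prop :=
  \det B = 1 \/ \det B = -1.

Definition even_form (n : nat) (B : 'M[int]_n) : Prop :=
  forall x : 'cV[int]_n, (2 %| (x^T *m B *m x) ord0 ord0)%Z.

(* signature (r, s) (Sylvester): diagonalisable over Q (hence over R)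
   with r positive and s negative diagonal entries and no zero entries *)
Definition has_signature (n : nat) (B : 'M[int]_n) (r s : nat) : Prop :=
  exists (P : 'M[rat]_n) (d : 'rV[rat]_n),
    [/\ P \in unitmx, P^T *m intmx rat B *m P = diag_mx d,
        #|[set i | 0 < d ord0 i]| = r, #|[set i | d ord0 i < 0]| = s
      & forall i, d ord0 i != 0].

Definition block_span (R : pzRingType) (n : nat) (P : 'M[R]_n)
  (blk : 'I_n -> 'I_3) (s : 'I_3) (x : 'cV[R]_n) : Prop :=
  exists v : 'cV[R]_n, (forall i, blk i != s -> v i ord0 = 0) /\ x = P *m v.

(* entrywise complex conjugation on C^n, i.e. on M (x) C *)
Definition conj_vec (C : numClosedFieldType) (n : nat) (y : 'cV[C]_n) : 'cV[C]_n :=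
  map_mx (fun z : C => z^*) y.

(* A Z-Hodge structure of weight 2 on M = Z^n: a decomposition
   M (x) C = H^{2,0} (+) H^{1,1} (+) H^{0,2} into C-subspaces with
   conj(H^{p,q}) = H^{q,p}.  H s is the piece H^{s,2-s}. *)
Definition Z_hodge_structure_wt2 (C : numClosedFieldType) (n : nat)
  (H : 'I_3 -> 'cV[C]_n -> Prop) : Prop :=
  [/\
      forall s, H s 0 /\ (forall (c : C) x y, H s x -> H s y -> H s (c *: x + y)),
      forall y, exists y0 y1 y2, [/\ H 0 y0, H 1 y1, H 2 y2 & y = y0 + y1 + y2],
      forall y0 y1 y2, H 0 y0 -> H 1 y1 -> H 2 y2 -> y0 + y1 + y2 = 0 ->
        [/\ y0 = 0, y1 = 0 & y2 = 0]
    &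
      forall s y, H s y -> H (rev_ord s) (conj_vec y)].

(* Main.v *)
Require Import Defs.
From HB Require Import structures.
From mathcomp Require Import all_boot all_order all_algebra.
From mathcomp Require Import zify.
Import Order.TTheory GRing.Theory Num.Theory.
Local Open Scope ring_scope.



Lemma padic_not_unit (Zp : comNzRingType) (p : nat) (pr_p : prime p)
  (hZp : is_padic_integers Zp p) (y : Zp) : 1 <> p%:R * y.
Proof.
move=> h; case: hZp => _ _ _ H4.
have := H4 1 1%N; rewrite /pdvd expn1 => /(_ (ex_intro _ y _)).
rewrite mulr1z => /(_ h); rewrite dvdzE /= dvdn1 => /eqP p1.
by move: (prime_gt1 pr_p); rewrite p1.
Qed.

Lemma no_int_pinv (Zp : comNzRingType) (C : numClosedFieldType)
  (iota : {rmorphism Zp -> C}) (iota_inj : injective iota) (p : nat)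
  (pr_p : prime p) (hnot : forall y : Zp, 1 <> p%:R * y) :
  ~ integralOver iota (p%:R^-1 : C).
Proof.
move=> [r mon_r hr].
have p0 : (p%:R : C) != 0 by rewrite pnatr_eq0 -lt0n prime_gt0.
have sz : size r = (size r).-1.+1 by rewrite prednK // lt0n size_poly_eq0 monic_neq0.
set d := (size r).-1 in sz.
move: hr; rewrite rootE horner_coef size_map_inj_poly ?rmorph0 // sz big_ord_recr /=.
rewrite coef_map /= -/d.
have ld : r`_d = 1 by move/monicP: mon_r; rewrite lead_coefE -/d.
rewrite ld rmorph1 mul1r => /eqP h.
move: (congr1 (fun z => (p%:R ^+ d : C) * z) h); rewrite mulr0 /=; rewrite mulrDr exprVn divff ?expf_neq0 // mulr_sumr.
under eq_bigr => i _.
  rewrite coef_map /= exprVn mulrCA -(expfB _ (ltn_ord i)).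
  rewrite -(subnSK (ltn_ord i)) exprS.
over.
move=> /eqP; rewrite addr_eq0 => /eqP h3.
apply: (hnot (- \sum_(i < d) r`_i * (p%:R ^+ (d - i.+1)))).
apply: iota_inj; rewrite rmorph1 rmorphM rmorphN rmorph_sum /= rmorph_nat mulrN mulr_sumr.
rewrite -[LHS]opprK; congr (- _); rewrite -h3; apply: eq_bigr => i _.
by rewrite rmorphM rmorphXn rmorph_nat /= mulrCA.
Qed.



Lemma eig_integral1 (Zp : comNzRingType) (C : numClosedFieldType)
  (iota : {rmorphism Zp -> C}) N (K0 : 'M[Zp]_N) (z : C) :
  eigenvalue (map_mx iota K0) z -> integralOver iota z.
Proof.
rewrite eigenvalue_root_char -map_char_poly => hz.
by exists (char_poly K0) => //; apply: char_poly_monic.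
Qed.

Lemma eig_integral (Zp : comNzRingType) (C : numClosedFieldType)
  (iota : {rmorphism Zp -> C}) N (K0 Ki0 : 'M[Zp]_N)
  (hK : map_mx iota K0 *m map_mx iota Ki0 = 1%:M) (z : C) :
  eigenvalue (map_mx iota K0) z -> integralOver iota z /\ integralOver iota z^-1.
Proof.
move=> hz; split; first exact: eig_integral1 hz.
apply: (@eig_integral1 _ _ _ _ Ki0).
move/eigenvalueP: hz => [v hv v0]; apply/eigenvalueP; exists v => //.
have e : v = z *: (v *m map_mx iota Ki0) by rewrite scalemxAl -hv -mulmxA hK mulmx1.
have z0 : z != 0 by apply: contra v0 => /eqP z0; rewrite e z0 scale0r.
by rewrite {2}e scalerA mulVf // scale1r.
Qed.



Lemma no_int_qinv (Zp : comNzRingType) (C : numClosedFieldType)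
  (iota : {rmorphism Zp -> C}) (iota_inj : injective iota) (p : nat)
  (pr_p : prime p) (hnot : forall y : Zp, 1 <> p%:R * y) (m : nat) :
  (0 < m)%N -> ~ integralOver iota ((p ^ m)%N%:R^-1 : C).
Proof.
move=> m0 hi; apply: (no_int_pinv _ _ _ iota_inj p pr_p hnot).
have p0 : (p%:R : C) != 0 by rewrite pnatr_eq0 -lt0n prime_gt0.
have pm0 : ((p ^ m.-1)%N%:R : C) != 0 by rewrite pnatr_eq0 expn_eq0 negb_and -lt0n prime_gt0.
have -> : (p%:R^-1 : C) = (p ^ m.-1)%N%:R * (p ^ m)%N%:R^-1.
  by rewrite -(prednK m0) expnS natrM invfM mulrCA divff // mulr1.
by apply: integral_mul => //; apply: integral_nat.
Qed.

Lemma eig_scale (C : fieldType) N (K : 'M[C]_N) (c w : C) :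
  c != 0 -> eigenvalue (c *: K) w -> eigenvalue K (w / c).
Proof.
move=> c0 /eigenvalueP [v hv v0]; apply/eigenvalueP; exists v => //.
apply: (scalerI c0); rewrite scalemxAr hv scalerA mulrC mulfVK //.
Qed.

Lemma eig_contra (Zp : comNzRingType) (C : numClosedFieldType)
  (iota : {rmorphism Zp -> C}) (iota_inj : injective iota) (p a : nat)
  (pr_p : prime p) (hnot : forall y : Zp, 1 <> p%:R * y) (a0 : (0 < a)%N)
  N (Ks Kis Kt Kit : 'M[Zp]_N)
  (hs : map_mx iota Ks *m map_mx iota Kis = 1%:M)
  (ht : map_mx iota Kt *m map_mx iota Kit = 1%:M)
  (s t : nat) (hst : (s + t != 2)%N) (z : C)
  (hz1 : eigenvalue (((p ^ a) ^ s)%N%:R *: map_mx iota Ks) z^*)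
  (hz2 : eigenvalue (((p ^ a) ^ t)%N%:R *: map_mx iota Kt) z)
  (habs : `|z| = (p ^ a)%N%:R) : False.
Proof.
set q : C := (p ^ a)%N%:R.
have q0 : q != 0 by rewrite pnatr_eq0 expn_eq0 negb_and -lt0n prime_gt0.
have nz k : (((p ^ a) ^ k)%N%:R : C) = q ^+ k by rewrite natrX.
move: hz1 hz2; rewrite !nz => hz1 hz2.
have [ia iai] := eig_integral _ _ _ _ _ _ hs _ (eig_scale _ _ _ _ _ (expf_neq0 _ q0) hz1).
have [ib ibi] := eig_integral _ _ _ _ _ _ ht _ (eig_scale _ _ _ _ _ (expf_neq0 _ q0) hz2).
have zz : z^* * z = q ^+ 2 by rewrite mulrC -normCK habs.
have hq k : (0 < k)%N -> ~ integralOver iota (q ^+ k)^-1.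
  by move=> k0; rewrite -natrX -expnM; apply: (no_int_qinv _ _ _ iota_inj p pr_p hnot) => //; rewrite muln_gt0 a0.
have ab : z^* / q ^+ s * (z / q ^+ t) = q ^+ 2 / q ^+ (s + t).
  by rewrite mulrACA zz exprD invfM.
case: (ltngtP (s + t) 2) => h; last by rewrite h eqxx in hst.
- apply: (hq (2 - (s + t))%N); first by rewrite subn_gt0.
  rewrite (expfB _ h) -ab invfM.
  exact: integral_mul.
- apply: (hq (s + t - 2)%N); first by rewrite subn_gt0.
  rewrite (expfB _ h) invf_div -ab.
  exact: integral_mul.
Qed.



Lemma hm_step (C : fieldType) N (A : 'M[C]_N.+1) (f : {poly C}) c (y : 'cV[C]_N.+1) :
  horner_mx A (f * 'X + c%:P) *m y = horner_mx A f *m (A *m y) + c *: y.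
Proof.
by rewrite rmorphD rmorphM /= horner_mx_X horner_mx_C mulmxDl -mulmxA mul_scalar_mx.
Qed.

Lemma hm_stab (C : fieldType) N (A : 'M[C]_N.+1) (V : 'cV[C]_N.+1 -> Prop)
  (V0 : V 0) (Vlin : forall c x y, V x -> V y -> V (c *: x + y))
  (VA : forall y, V y -> V (A *m y)) f y : V y -> V (horner_mx A f *m y).
Proof.
elim/poly_ind: f y => [|f c IH] y Vy; first by rewrite rmorph0 mul0mx.
rewrite hm_step addrC; apply: Vlin => //; exact/IH/VA.
Qed.

Lemma hm_agree (C : fieldType) N (A H : 'M[C]_N.+1) (V : 'cV[C]_N.+1 -> Prop)
  (VA : forall y, V y -> V (A *m y)) (hAH : forall y, V y -> A *m y = H *m y)
  f y : V y -> horner_mx A f *m y = horner_mx H f *m y.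
Proof.
elim/poly_ind: f y => [|f c IH] y Vy; first by rewrite !rmorph0 !mul0mx.
rewrite !hm_step IH; [by rewrite hAH | exact: VA].
Qed.

Lemma ann_mul (C : fieldType) N (A : 'M[C]_N.+1) (w : 'cV[C]_N.+1) f g :
  horner_mx A f *m w = 0 -> horner_mx A (g * f) *m w = 0.
Proof. by move=> h; rewrite rmorphM /= -mulmxA h mulmx0. Qed.

Lemma ann_add (C : fieldType) N (A : 'M[C]_N.+1) (w : 'cV[C]_N.+1) f g :
  horner_mx A f *m w = 0 -> horner_mx A g *m w = 0 ->
  horner_mx A (f + g) *m w = 0.
Proof. by move=> h1 h2; rewrite rmorphD mulmxDl h1 h2 addr0. Qed.

Lemma ann_eqp (C : fieldType) N (A : 'M[C]_N.+1) (w : 'cV[C]_N.+1) f g :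
  f %= g -> horner_mx A g *m w = 0 -> horner_mx A f *m w = 0.
Proof.
move=> /eqpP [[c1 c2] /andP [/= c10 c20] e] h.
apply: (scalerI c10); rewrite scaler0 scalemxAl -horner_mxZ e horner_mxZ.
by rewrite -scalemxAl h scaler0.
Qed.

Lemma ann_gcd (C : fieldType) N (A : 'M[C]_N.+1) (w : 'cV[C]_N.+1) f g :
  horner_mx A f *m w = 0 -> horner_mx A g *m w = 0 ->
  horner_mx A (gcdp f g) *m w = 0.
Proof.
move=> h1 h2; have [u hu] := Bezoutp f g.
rewrite eqp_sym in hu; apply: (ann_eqp C N A w _ _ hu).
by apply: ann_add; apply: ann_mul.
Qed.

Lemma ann_cop (C : fieldType) N (A : 'M[C]_N.+1) (w : 'cV[C]_N.+1) f g :
  coprimep f g -> horner_mx A f *m w = 0 -> horner_mx A g *m w = 0 -> w = 0.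
Proof.
rewrite -gcdp_eqp1 => hc h1 h2.
rewrite eqp_sym in hc.
have := ann_eqp C N A w _ _ hc (ann_gcd C N A w f g h1 h2).
by rewrite rmorph1 mul1mx.
Qed.



Lemma conj_core (C : numClosedFieldType) N (F' : 'M[C]_N.+1)
  (V : 'I_3 -> 'cV[C]_N.+1 -> Prop)
  (hV0 : forall s, V s 0)
  (hVlin : forall s c x y, V s x -> V s y -> V s (c *: x + y))
  (hspan : forall y, exists y0 y1 y2, [/\ V 0 y0, V 1 y1, V 2%:R y2 & y = y0 + y1 + y2])
  (hdir : forall y0 y1 y2, V 0 y0 -> V 1 y1 -> V 2%:R y2 -> y0 + y1 + y2 = 0 ->
        [/\ y0 = 0, y1 = 0 & y2 = 0])
  (hVF : forall s y, V s y -> V s (F' *m y))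
  (hreal : map_mx (@Num.conj C) F' = F')
  (H : 'I_3 -> 'M[C]_N.+1) (hH : forall s y, V s y -> F' *m y = H s *m y)
  (heig : forall (s t : 'I_3) z, (s + t != 2)%N -> eigenvalue (H s) z^* ->
      eigenvalue (H t) z -> eigenvalue F' z -> False) :
  forall s y, V s y -> V (rev_ord s) (conj_vec y).
Proof.
move=> s y Vy.
set chs := char_poly (H s).
have hy : horner_mx F' chs *m y = 0.
  rewrite (hm_agree C N F' (H s) (V s) (hVF s) (hH s)) //.
  by rewrite Cayley_Hamilton mul0mx.
set phi := map_poly (@Num.conj C) chs.
have hcy : horner_mx F' phi *m conj_vec y = 0.
  have := congr1 (map_mx (@Num.conj C)) hy.
  by rewrite map_mxM map_horner_mx hreal map_mx0.
have [y0 [y1 [y2 [V0 V1 V2 ey]]]] := hspan (conj_vec y).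
have stab t w : V t w -> V t (horner_mx F' phi *m w).
  by apply: hm_stab => //; [apply: hVlin | apply: hVF].
move: hcy; rewrite ey !mulmxDr => /(hdir _ _ _ (stab _ _ V0) (stab _ _ V1) (stab _ _ V2)).
move=> [a0 a1 a2].
have key t w : t != rev_ord s -> V t w -> horner_mx F' phi *m w = 0 -> w = 0.
  move=> nt Vw aw.
  apply: (ann_cop C N F' w (gcdp phi (char_poly F')) (char_poly (H t))).
  - apply: Pdiv.ClosedField.root_coprimep => x; rewrite root_gcd => /andP [r1 r2].
    apply/negP => r3; apply: (heig s t x).
    + apply: contra nt => /eqP st; apply/eqP/val_inj => /=.
      move: (ltn_ord s) (ltn_ord t); lia.
    + rewrite eigenvalue_root_char; move: r1; rewrite /root /phi.
      by rewrite -{1}[x]conjCK horner_map /= conjC_eq0.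
    + by rewrite eigenvalue_root_char.
    + by rewrite eigenvalue_root_char.
  - apply: ann_gcd => //; by rewrite Cayley_Hamilton mul0mx.
  - rewrite (hm_agree C N F' (H t) (V t) (hVF t) (hH t)) //.
    by rewrite Cayley_Hamilton mul0mx.
have fin t w : V t w -> horner_mx F' phi *m w = 0 -> V (rev_ord s) w.
  move=> Vw aw; case: (eqVneq t (rev_ord s)) => [<- //|nt].
  by rewrite (key t w nt Vw aw).
have hadd t w1 w2 : V t w1 -> V t w2 -> V t (w1 + w2).
  by move=> h1 h2; rewrite -[w1]scale1r; apply: hVlin.
apply: (hadd); last exact: fin _ _ V2 a2.
by apply: (hadd); [exact: fin _ _ V0 a0 | exact: fin _ _ V1 a1].
Qed.



Lemma mx_delta_col (R : pzRingType) m n (M : 'M[R]_(m, n)) i k :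
  (M *m delta_mx k (0 : 'I_1)) i 0 = M i k.
Proof. by rewrite -colE mxE. Qed.

Lemma block_op (Zp : comNzRingType) (C : numClosedFieldType)
  (iota : {rmorphism Zp -> C}) N (P Q : 'M[Zp]_N)
  (PQ : P *m Q = 1%:M) (QP : Q *m P = 1%:M) (Fz : 'M[Zp]_N)
  (blk : 'I_N -> 'I_3) (s : 'I_3) (c : Zp) (hc : iota c != 0)
  (stab1 : forall x, block_span P blk s x ->
     exists y, block_span P blk s y /\ Fz *m x = c *: y)
  (stab2 : forall y, block_span P blk s y ->
     exists x, block_span P blk s x /\ Fz *m x = c *: y) :
  exists K0 Ki0 : 'M[Zp]_N,
    [/\ map_mx iota K0 *m map_mx iota Ki0 = 1%:M,
        forall y, block_span (map_mx iota P) blk s y ->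
          map_mx iota Fz *m y = iota c *: (map_mx iota K0 *m y)
      & forall y, block_span (map_mx iota P) blk s y ->
          block_span (map_mx iota P) blk s (map_mx iota K0 *m y)].
Proof.
set supp := fun (R : pzRingType) (v : 'cV[R]_N) => forall i, blk i != s -> v i ord0 = 0.
have dsupp j : blk j = s -> block_span P blk s (P *m delta_mx j 0).
  move=> bj; exists (delta_mx j 0); split => // i bi; rewrite mxE.
  have ij : i != j by apply: contra bi => /eqP ->; rewrite bj.
  by rewrite (negPf ij).
pose Pw (j : 'I_N) (w : 'cV[Zp]_N) :=
    (blk j = s -> supp _ w /\ Fz *m (P *m delta_mx j 0) = c *: (P *m w)) /\
    (blk j != s -> w = delta_mx j 0).
have [wf hw] : exists wf : 'I_N -> 'cV[Zp]_N, forall j, Pw j (wf j).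
  apply: (@fin_all_exists _ (fun _ => 'cV[Zp]_N) Pw) => j; rewrite /Pw; case: (eqVneq (blk j) s) => bj.
    have [y [[v [sv ->]] e]] := stab1 _ (dsupp j bj).
    by exists v; split.
  by exists (delta_mx j 0); split => // /eqP; rewrite (negPf bj).
pose Pz (j : 'I_N) (w : 'cV[Zp]_N) :=
    (blk j = s -> supp _ w /\ Fz *m (P *m w) = c *: (P *m delta_mx j 0)) /\
    (blk j != s -> w = delta_mx j 0).
have [zf hz] : exists zf : 'I_N -> 'cV[Zp]_N, forall j, Pz j (zf j).
  apply: (@fin_all_exists _ (fun _ => 'cV[Zp]_N) Pz) => j; rewrite /Pz; case: (eqVneq (blk j) s) => bj.
    have [x [[v [sv ->]] e]] := stab2 _ (dsupp j bj).
    by exists v; split.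
  by exists (delta_mx j 0); split => // /eqP; rewrite (negPf bj).
pose A0 := \matrix_(i, j) wf j i 0.
pose Z0 := \matrix_(i, j) zf j i 0.
set P' := map_mx iota P; set Q' := map_mx iota Q.
set A' := map_mx iota A0; set Z' := map_mx iota Z0; set F' := map_mx iota Fz.
set c' := iota c.
have QP' : Q' *m P' = 1%:M by rewrite -map_mxM QP map_mx1.
have PQ' : P' *m Q' = 1%:M by rewrite -map_mxM PQ map_mx1.
have colA j : A' *m delta_mx j 0 = map_mx iota (wf j).
  by apply/matrixP => i k; rewrite ord1 mx_delta_col !mxE.
have colZ j : Z' *m delta_mx j 0 = map_mx iota (zf j).
  by apply/matrixP => i k; rewrite ord1 mx_delta_col !mxE.
have key1 v : supp _ v -> F' *m (P' *m v) = c' *: (P' *m (A' *m v)).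
  move=> sv.
  suff : Q' *m F' *m P' *m v = c' *: (A' *m v).
    by move/(congr1 (mulmx P')); rewrite !mulmxA PQ' mul1mx -scalemxAr !mulmxA.
  apply/matrixP => i k; rewrite ord1 !mxE mulr_sumr; apply: eq_bigr => j _.
  case: (eqVneq (blk j) s) => bj; last by rewrite (sv j bj) !mulr0.
  have [_ e] := (hw j).1 bj.
  have := congr1 (fun M => (Q' *m map_mx iota M) i 0) e.
  rewrite /= !(map_mxM, map_mxZ, map_delta_mx) -/F' -/P' -scalemxAr !mulmxA QP' mul1mx.
  rewrite mx_delta_col => ->; rewrite !mxE mulrA.
  by [].
have key2 v : supp _ v -> supp _ (A' *m v).
  move=> sv i bi; rewrite !mxE big1 // => j _.
  case: (eqVneq (blk j) s) => bj; last by rewrite (sv j bj) mulr0.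
  by rewrite !mxE ((hw j).1 bj).1 // rmorph0 mul0r.
have AZ : A' *m Z' = 1%:M.
  apply/matrixP => i k; rewrite -mx_delta_col -[in RHS]mx_delta_col -mulmxA colZ mul1mx.
  suff -> : A' *m map_mx iota (zf k) = delta_mx k 0 by [].
  case: (eqVneq (blk k) s) => bk; last first.
    by rewrite ((hz k).2 bk) map_delta_mx colA ((hw k).2 bk) map_delta_mx.
  have [sz e] := (hz k).1 bk.
  have sz' : supp _ (map_mx iota (zf k)) by move=> i' bi'; rewrite mxE sz // rmorph0.
  have := congr1 (map_mx iota) e; rewrite !(map_mxM, map_mxZ, map_delta_mx).
  rewrite -/F' -/P' key1 // => /(scalerI hc) /(congr1 (mulmx Q')).
  by rewrite !mulmxA QP' !mul1mx.
exists (P *m A0 *m Q), (P *m Z0 *m Q); split.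
- rewrite !map_mxM -/P' -/Q' -/A' -/Z'.
  by rewrite !mulmxA -[P' *m A' *m Q' *m P'](mulmxA) QP' mulmx1 -(mulmxA P') AZ mulmx1 PQ'.
- move=> y [v [sv ->]]; rewrite key1 // !map_mxM -/P' -/Q' -/A'.
  by rewrite -!mulmxA (mulmxA Q') QP' mul1mx.
- move=> y [v [sv ->]]; rewrite !map_mxM -/P' -/Q' -/A'.
  exists (A' *m v); split; first exact: key2.
  by rewrite -!mulmxA (mulmxA Q') QP' mul1mx.
Qed.



Lemma blocks_lin (C : numClosedFieldType) N (P' : 'M[C]_N) blk (s : 'I_3) :
  block_span P' blk s 0 /\
  (forall c x y, block_span P' blk s x -> block_span P' blk s y ->
     block_span P' blk s (c *: x + y)).
Proof.
split; first by exists 0; split => [i _|]; rewrite ?mxE ?mulmx0.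
move=> c x y [v [sv ->]] [w [sw ->]]; exists (c *: v + w); split.
  by move=> i bi; rewrite !mxE sv // sw // mulr0 addr0.
by rewrite mulmxDr scalemxAr.
Qed.

Lemma blk_cases (b : 'I_3) : [\/ b = 0, b = 1 | b = 2%:R].
Proof.
case: b => [[|[|[|m]]] lt].
- by constructor 1; apply: val_inj.
- by constructor 2; apply: val_inj.
- by constructor 3; apply: val_inj.
- by [].
Qed.

Lemma blocks_span (C : numClosedFieldType) N (P' Q' : 'M[C]_N)
  (PQ' : P' *m Q' = 1%:M) blk (y : 'cV[C]_N) :
  exists y0 y1 y2, [/\ block_span P' blk 0 y0, block_span P' blk 1 y1,
                       block_span P' blk 2%:R y2 & y = y0 + y1 + y2].
Proof.
pose v := Q' *m y.
pose vt (t : 'I_3) : 'cV[C]_N := \col_i (if blk i == t then v i 0 else 0).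
have bs t : block_span P' blk t (P' *m vt t).
  by exists (vt t); split => // i bi; rewrite mxE (negPf bi).
exists (P' *m vt 0), (P' *m vt 1), (P' *m vt 2%:R); split => //.
rewrite -!mulmxDr; suff -> : vt 0 + vt 1 + vt 2%:R = v by rewrite mulmxA PQ' mul1mx.
apply/matrixP => i k; rewrite ord1 !mxE.
by case: (blk_cases (blk i)) => ->; rewrite /= ?addr0 ?add0r.
Qed.

Lemma blocks_dir (C : numClosedFieldType) N (P' Q' : 'M[C]_N)
  (QP' : Q' *m P' = 1%:M) blk (y0 y1 y2 : 'cV[C]_N) :
  block_span P' blk 0 y0 -> block_span P' blk 1 y1 -> block_span P' blk 2%:R y2 ->
  y0 + y1 + y2 = 0 -> [/\ y0 = 0, y1 = 0 & y2 = 0].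
Proof.
move=> [v0 [s0 ->]] [v1 [s1 ->]] [v2 [s2 ->]] h.
have hv : v0 + v1 + v2 = 0.
  by move: (congr1 (mulmx Q') h); rewrite -!mulmxDr mulmxA QP' mul1mx mulmx0.
have E i : [/\ v0 i 0 = 0, v1 i 0 = 0 & v2 i 0 = 0].
  have := congr1 (fun M : 'cV[C]_N => M i 0) hv; rewrite !mxE.
  case: (blk_cases (blk i)) => b.
  - by rewrite (s1 i) ?b // (s2 i) ?b // !addr0 => ->; split; rewrite ?s1 ?s2 ?b.
  - by rewrite (s0 i) ?b // (s2 i) ?b // addr0 add0r => ->; split; rewrite ?s0 ?s2 ?b.
  - by rewrite (s0 i) ?b // (s1 i) ?b // !add0r => ->; split; rewrite ?s0 ?s1 ?b.
have Z (v : 'cV[C]_N) : (forall i, v i 0 = 0) -> P' *m v = 0.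
  move=> hz; suff -> : v = 0 by rewrite mulmx0.
  by apply/matrixP => i k; rewrite ord1 mxE hz.
by split; apply: Z => i; case: (E i).
Qed.



Theorem lemma3p3
  (p a : nat) (pr_p : prime p) (a_gt0 : (0 < a)%N)
  (Zp : comNzRingType) (hZp : is_padic_integers Zp p)
  (C : numClosedFieldType)
  (iota : {rmorphism Zp -> C}) (iota_inj : injective iota)
  (n : nat) (B F : 'M[int]_n)
  (* (M1) *)
  (B_sym : B^T = B) (B_unimod : unimodular B) (B_even : even_form B)
  (B_sign : has_signature B 3 19)
  (* (M2) *)
  (HF_form : F^T *m B *m F = ((p ^ a) ^ 2)%N%:R *: B)
  (* (M3) *)
  (HF_ss : diagonalizable (intmx C F))
  (HF_abs : forall z : C, eigenvalue (intmx C F) z -> `|z| = (p ^ a)%N%:R)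
  (* (M4): a Zp-basis P of M (x) Zp = Zp^n and a partition of it into
     blocks 0,1,2 of sizes 1,20,1 spanning M^0, M^1, M^2 *)
  (P Q : 'M[Zp]_n) (PQ : P *m Q = 1%:M) (QP : Q *m P = 1%:M)
  (blk : 'I_n -> 'I_3)
  (blk0 : #|[set i | blk i == 0]| = 1%N)
  (blk1 : #|[set i | blk i == 1]| = 20%N)
  (blk2 : #|[set i | blk i == 2%:R]| = 1%N)
  (HF_stab : forall s : 'I_3,
     (forall x, block_span P blk s x ->
        exists y, block_span P blk s y /\ intmx Zp F *m x = ((p ^ a) ^ s)%N%:R *: y)
     /\ (forall y, block_span P blk s y ->
        exists x, block_span P blk s x /\ intmx Zp F *m x = ((p ^ a) ^ s)%N%:R *: y)) :
  let MC := fun s : 'I_3 => block_span (map_mx iota P) blk s in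
  (forall s : 'I_3,
     (forall y, MC s y -> MC (rev_ord s) (conj_vec y)) /\
     (forall z, MC (rev_ord s) z -> exists y, MC s y /\ conj_vec y = z))
  /\ Z_hodge_structure_wt2 MC.
Proof.
destruct n as [|N].
  by move: (max_card [set i | blk i == 0]); rewrite blk0 card_ord.
move=> MC.
have hnot := padic_not_unit Zp p pr_p hZp.
set P' := map_mx iota P; set Q' := map_mx iota Q.
have QP' : Q' *m P' = 1%:M by rewrite -map_mxM QP map_mx1.
have PQ' : P' *m Q' = 1%:M by rewrite -map_mxM PQ map_mx1.
set F' := intmx C F.
have mapF : map_mx iota (intmx Zp F) = F'.
  by apply/matrixP => i j; rewrite !mxE rmorph_int.
have hq s : iota ((p ^ a) ^ s)%N%:R = ((p ^ a) ^ s)%N%:R by rewrite rmorph_nat.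
have hq0 s : (((p ^ a) ^ s)%N%:R : C) != 0.
  by rewrite pnatr_eq0 !expn_eq0 !negb_and -lt0n prime_gt0 ?orbT.
pose PK s (KK : 'M[Zp]_N.+1 * 'M[Zp]_N.+1) :=
  [/\ map_mx iota KK.1 *m map_mx iota KK.2 = 1%:M,
      forall y, MC s y -> F' *m y = ((p ^ a) ^ s)%N%:R *: (map_mx iota KK.1 *m y)
    & forall y, MC s y -> MC s (map_mx iota KK.1 *m y)].
have [KK hK] : exists KK : 'I_3 -> 'M[Zp]_N.+1 * 'M[Zp]_N.+1, forall s, PK s (KK s).
  apply: (@fin_all_exists _ (fun _ => ('M[Zp]_N.+1 * 'M[Zp]_N.+1)%type) PK) => s.
  have [h1 h2] := HF_stab s.
  have [K0 [Ki0 [e1 e2 e3]]] := block_op Zp C iota N.+1 P Q PQ QP (intmx Zp F) blk s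
       ((p ^ a) ^ s)%N%:R ltac:(by rewrite hq hq0) h1 h2.
  exists (K0, Ki0); split => //= y hy.
  by rewrite -mapF e2 // hq.
pose H (s : 'I_3) := ((p ^ a) ^ s)%N%:R *: map_mx iota (KK s).1.
have hlin s := blocks_lin C N.+1 P' blk s.
have hV0 s : MC s 0 by case: (hlin s).
have hVlin s c x y : MC s x -> MC s y -> MC s (c *: x + y) by case: (hlin s) => _; apply.
have hspan := blocks_span C N.+1 P' Q' PQ' blk.
have hdir := blocks_dir C N.+1 P' Q' QP' blk.
have hVF s y : MC s y -> MC s (F' *m y).
  move=> hy; case: (hK s) => _ e2 e3; rewrite e2 //.
  by rewrite -[_ *: _]addr0; apply: hVlin => //; exact: e3.
have hreal : map_mx (@Num.conj C) F' = F'.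
  by apply/matrixP => i j; rewrite !mxE rmorph_int.
have hH s y : MC s y -> F' *m y = H s *m y.
  by move=> hy; case: (hK s) => _ e2 _; rewrite e2 // /H scalemxAl.
have heig (s t : 'I_3) z : (s + t != 2)%N -> eigenvalue (H s) z^* ->
      eigenvalue (H t) z -> eigenvalue F' z -> False.
  move=> hst h1 h2 h3.
  case: (hK s) => e1 _ _; case: (hK t) => e1' _ _.
  exact: (eig_contra Zp C iota iota_inj p a pr_p hnot a_gt0 N.+1 _ _ _ _ e1 e1' s t hst z h1 h2 (HF_abs z h3)).
have hsym := conj_core C N F' MC hV0 hVlin hspan hdir hVF hreal H hH heig.
have cc (z : 'cV[C]_N.+1) : conj_vec (conj_vec z) = z.
  by apply/matrixP => i j; rewrite !mxE conjCK.
split.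
  move=> s; split; first exact: hsym.
  move=> z hz; exists (conj_vec z); split; last exact: cc.
  by have := hsym _ _ hz; rewrite rev_ordK.
split.
- by move=> s; split; [exact: hV0 | exact: hVlin].
- exact: hspan.
- exact: hdir.
- exact: hsym.
Qed.
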